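(* Let $\lambda=(n_1,n_2)$ be a two-row shape with $n_1\ge n_2\ge 2$, and let $\rho$ be a density on $\lambda$ with positive entries $\rho_{1,j}=a_j$ ($1\le j\le n_1$) and $\rho_{2,j}=b_j$ ($1\le j\le n_2$). Let $\lambda'=(n_1-1,n_2-1)$ and, for $0\le i\le b_1$, let $\rho'_i$ be the density on $\lambda'$ with first row $(a_2,a_3,\dots,a_{n_1})$ and second row $(b_1+b_2-i,\,b_3,\dots,b_{n_2})$. Then $$|\mathrm{SVT}(\lambda,\rho)|=\sum_{i=0}^{b_1}\binom{a_2+i-1}{i}\,|\mathrm{SVT}(\lambda',\rho'_i)|.$$
   Context: A density on a shape $\lambda$ is an assignment of a nonnegative integer $\rho_{i,j}$ to every cell $(i,j)$ (row $i$, column $j$); let $N=\sum\rho_{i,j}$. A standard set-valued Young tableau of shape $\lambda$ and density $\rho$ assigns to each cell $(i,j)$ a set $S_{i,j}$ with $|S_{i,j}|=\rho_{i,j}$, the sets partitioning $[N]$, such that every element of $S_{i,j}$ is smaller than every element of $S_{i,j+1}$ and of $S_{i+1,j}$ whenever those cells exist. $\mathrm{SVT}(\lambda,\rho)$ is the set of these tableaux. *)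

(* Defs.v *)
From mathcomp Require Import all_boot.
Set Implicit Arguments. Unset Strict Implicit. Unset Printing Implicit Defensive.

(* Conventions (0-indexed internally): a shape is a partition given as the
   sequence of its row lengths [lam]; cell (i,j) lies in the shape iff
   i < size lam and j < nth 0 lam i.  A density is rho : nat -> nat -> nat,
   rho i j being the density of cell (i,j) (values outside the shape are
   irrelevant). *)

Definition in_shape (lam : seq nat) (i j : nat) : bool :=
  (i < size lam) && (j < nth 0 lam i).

Definition svt_N (lam : seq nat) (rho : nat -> nat -> nat) : nat :=
  \sum_(i < size lam) \sum_(j < nth 0 lam i) rho i j.

Definition max_row (lam : seq nat) : nat := foldr maxn 0 lam.

(* A standard set-valued tableau is encoded by the map f : [N] -> cells
   sending each number k to the unique cell (i,j) with k \in S_{i,j}.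
   (Numbers 1..N are represented by 'I_N, i.e. 0..N-1, which does not
   affect the order conditions.) *)
Definition cell_t (lam : seq nat) := ('I_(size lam) * 'I_(max_row lam))%type.

Definition is_svt (lam : seq nat) (rho : nat -> nat -> nat)
    (f : {ffun 'I_(svt_N lam rho) -> cell_t lam}) : bool :=
  [&& [forall x, in_shape lam (val (f x).1) (val (f x).2)],
      [forall c : cell_t lam, in_shape lam (val c.1) (val c.2) ==>
          (#|[pred x | f x == c]| == rho (val c.1) (val c.2))],
      [forall x, forall y,
          ((val (f y).1 == val (f x).1) && (val (f y).2 == (val (f x).2).+1))
            ==> (val x < val y)] &
      [forall x, forall y,
          ((val (f y).1 == (val (f x).1).+1) && (val (f y).2 == val (f x).2))
            ==> (val x < val y)]].

Definition svt_count (lam : seq nat) (rho : nat -> nat -> nat) : nat :=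
  #|[pred f | @is_svt lam rho f]|.

(* Main.v *)
Require Import Defs.
From mathcomp Require Import all_boot zify.
From Stdlib Require Import FunctionalExtensionality.
Set Implicit Arguments. Unset Strict Implicit. Unset Printing Implicit Defensive.


Fixpoint cntw (T : finType) (n : nat) (P : seq T -> bool) : nat :=
  match n with 0 => P [::] | n'.+1 => \sum_(c : T) cntw n' (fun w => P (c :: w)) end.

Lemma card_sumE (T : finType) (Q : pred T) : #|[pred x | Q x]| = \sum_x (Q x : nat).
Proof.
rewrite -sum1_card big_mkcond /=; apply: eq_bigr => x _; by rewrite inE; case: (Q x).
Qed.

Lemma card_words (T : finType) n (P : seq T -> bool) :
  #|[pred f : {ffun 'I_n -> T} | P [seq f i | i <- enum 'I_n]]| = cntw n P.
Proof.
elim: n P => [|n IH] P.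
  case HP: (P [::]).
    rewrite eq_cardT; first by rewrite -cardT card_ffun card_ord expn0 /= HP.
    by move=> f; rewrite !inE enum_ord0 /= HP.
  rewrite /= HP; by apply: eq_card0 => f; rewrite !inE enum_ord0 /= HP.
rewrite card_sumE /=.
pose h (p : T * {ffun 'I_n -> T}) : {ffun 'I_n.+1 -> T} :=
  [ffun i => if unlift ord0 i is Some j then p.2 j else p.1].
pose g (f : {ffun 'I_n.+1 -> T}) := (f ord0, [ffun j => f (lift ord0 j)]).
have hb : bijective h.
  exists g.
    case=> c q; rewrite /g /h /= ffunE unlift_none; congr pair.
    by apply/ffunP => j; rewrite !ffunE liftK.
  move=> f; apply/ffunP => i; rewrite /g /h !ffunE /=.
  by case: unliftP => [j ->|->]; rewrite ?ffunE.
rewrite (reindex h (onW_bij _ hb)) /=.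
rewrite -(pair_bigA _ (fun c q => (P [seq h (c, q) i | i <- enum 'I_n.+1] : nat))).
apply: eq_bigr => c _.
rewrite -IH card_sumE; apply: eq_bigr => q _.
rewrite enum_ordSl /= /h ffunE unlift_none -map_comp.
congr (nat_of_bool (P (c :: _))); apply: eq_map => j /=; by rewrite ffunE liftK.
Qed.


Lemma card_countE (T : finType) (P : pred T) : #|[pred x | P x]| = count P (enum T).
Proof.
rewrite -sum1_card big_mkcond /=.
rewrite -big_enum /=.
elim: (enum T) => [|x s IH]; rewrite ?big_nil ?big_cons //= IH inE.
by case: (P x).
Qed.

Fixpoint okwR (T : Type) (R : rel T) (s : seq T) : bool :=
  if s is c :: s' then all (fun d => ~~ R d c) s' && okwR R s' else true.

Lemma okwR_map (T : Type) (R : rel T) (HR : forall c, ~~ R c c) n (f : 'I_n -> T) :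
  okwR R [seq f i | i <- enum 'I_n] = [forall x, forall y, R (f x) (f y) ==> (x < y)].
Proof.
elim: n f => [|n IH] f.
  rewrite enum_ord0 /=; apply/esym/forallP => -[] //.
rewrite enum_ordSl /= -map_comp IH.
apply/idP/idP.
  case/andP => Hall Hok; apply/forallP => x; apply/forallP => y; apply/implyP => Rxy.
  case: (unliftP ord0 x) => [x' Ex | Ex]; case: (unliftP ord0 y) => [y' Ey | Ey]; subst.
  - rewrite !lift0 ltnS. by have := forallP (forallP Hok x') y'; rewrite /= Rxy.
  - rewrite all_map in Hall.
    by have := allP Hall x' (mem_enum _ _); rewrite /= Rxy.
  - by rewrite lift0.
  - by move: (HR (f ord0)); rewrite Rxy.
move=> H; apply/andP; split.
  rewrite all_map; apply/allP => x' _; apply/negP => /= Rd.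
  by have := forallP (forallP H (lift ord0 x')) ord0; rewrite /= Rd /=.
apply/forallP => x; apply/forallP => y; apply/implyP => Rxy.
by have := forallP (forallP H (lift ord0 x)) (lift ord0 y); rewrite Rxy implyTb !lift0 ltnS.
Qed.

Definition insT lam (c : cell_t lam) := in_shape lam (val c.1) (val c.2).
Definition RrT lam (c d : cell_t lam) : bool :=
  ((val d.1 == val c.1) && (val d.2 == (val c.2).+1)) ||
  ((val d.1 == (val c.1).+1) && (val d.2 == val c.2)).
Definition validw lam (r : cell_t lam -> nat) (s : seq (cell_t lam)) :=
  [&& all (@insT lam) s, [forall c, insT c ==> (count_mem c s == r c)] & okwR (@RrT lam) s].

Lemma RrT_irr lam (c : cell_t lam) : ~~ RrT c c.
Proof. by rewrite /RrT !eqxx andbT !(ltn_eqF (ltnSn _)). Qed.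

Lemma is_svt_validw lam rho f :
  @is_svt lam rho f =
  validw (fun c => rho (val c.1) (val c.2)) [seq f i | i <- enum 'I_(svt_N lam rho)].
Proof.
rewrite /is_svt /validw (okwR_map (@RrT_irr lam)).
congr (_ && (_ && _)).
- rewrite all_map; apply/forallP/allP => H x; [by move=> _; apply: H | exact: H x (mem_enum _ x)].
- apply: eq_forallb => c.
  have -> : count_mem c [seq f i | i <- enum 'I_(svt_N lam rho)] =
     count (fun x => f x == c) (enum 'I_(svt_N lam rho)) by rewrite count_map.
  by rewrite card_countE.
apply/idP/idP.
  case/andP => H3 H4; apply/forallP => x; apply/forallP => y; apply/implyP; rewrite /RrT.
  case/orP => Hc; [exact: (implyP (forallP (forallP H3 x) y)) | exact: (implyP (forallP (forallP H4 x) y))].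
move=> H; apply/andP; split; apply/forallP => x; apply/forallP => y; apply/implyP => Hc;
  apply: (implyP (forallP (forallP H x) y)); by rewrite /RrT Hc ?orbT.
Qed.


Definition upd (rho : nat -> nat -> nat) r c v : nat -> nat -> nat :=
  fun i j => if (i == r) && (j == c) then v else rho i j.
Definition decn rho r c := upd rho r c (rho r c).-1.
Definition availn lam (rho : nat -> nat -> nat) i j :=
  [&& 0 < rho i j,
      (j == 0) || ~~ in_shape lam i j.-1 || (rho i j.-1 == 0) &
      (i == 0) || ~~ in_shape lam i.-1 j || (rho i.-1 j == 0)].
Fixpoint wn lam n rho : nat :=
  match n with
  | 0 => (svt_N lam rho == 0 : nat)
  | n'.+1 => \sum_(i < size lam) \sum_(j < nth 0 lam i)
               (if availn lam rho i j then wn lam n' (decn rho i j) else 0)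
  end.
Definition swn lam rho := wn lam (svt_N lam rho) rho.

Definition rhoT lam (rho : nat -> nat -> nat) (c : cell_t lam) : nat := rho (val c.1) (val c.2).

Lemma rhoT_decn lam rho (c d : cell_t lam) :
  rhoT (decn rho (val c.1) (val c.2)) d = if d == c then (rhoT rho c).-1 else rhoT rho d.
Proof.
rewrite /rhoT /decn /upd; case: (eqVneq d c) => [->|Hne]; first by rewrite !eqxx.
case: ifP => // /andP [/eqP E1 /eqP E2]; case/eqP: Hne.
by case: d c E1 E2 => [d1 d2] [c1 c2] /= /val_inj -> /val_inj ->.
Qed.

Lemma validw_cons lam rho (c : cell_t lam) w :
  validw (rhoT rho) (c :: w) =
  (insT c && (0 < rhoT rho c) && [forall d, (insT d && (0 < rhoT rho d)) ==> ~~ RrT d c])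
  && validw (rhoT (decn rho (val c.1) (val c.2))) w.
Proof.
rewrite /validw /=.
apply/idP/idP.
- case/and3P => /andP [Hc Hw] /forallP Hcnt /andP [Hall Hok].
  have Hc0 : 0 < rhoT rho c.
    by have := implyP (Hcnt c) Hc; rewrite /= eqxx => /eqP <-.
  rewrite Hc Hc0 Hw Hok /= andbT.
  apply/andP; split.
  + apply/forallP => d; apply/implyP => /andP [Hd Hd0].
    case: (eqVneq d c) => [->|Hne]; first exact: RrT_irr.
    have := implyP (Hcnt d) Hd; rewrite (eq_sym c d) (negbTE Hne) add0n => /eqP Hcd.
    have Hin : d \in w by rewrite -has_pred1 has_count Hcd.
    exact: allP Hall d Hin.
  + apply/forallP => d; apply/implyP => Hd; rewrite rhoT_decn.
    have := implyP (Hcnt d) Hd.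
    case: (eqVneq d c) => [->|Hne]; first by rewrite ?eqxx add1n => /eqP <-.
    by rewrite ?(eq_sym c d) ?(negbTE Hne) /= ?add0n.
- case/and4P => /andP [/andP [Hc Hc0] /forallP Hav] Hw /forallP Hcnt Hok.
  rewrite Hc Hw Hok /= andbT.
  apply/andP; split.
  + apply/forallP => d; apply/implyP => Hd; have := implyP (Hcnt d) Hd; rewrite rhoT_decn.
    case: (eqVneq d c) => [->|Hne]; first by rewrite ?eqxx => /eqP ->; rewrite add1n prednK.
    by rewrite ?(eq_sym c d) ?(negbTE Hne) /= ?add0n.
  + apply/allP => d Hin.
    have Hd : insT d := allP Hw d Hin.
    case: (eqVneq d c) => [->|Hne]; first exact: RrT_irr.
    apply: (implyP (Hav d)); rewrite Hd /=.
    have := implyP (Hcnt d) Hd; rewrite rhoT_decn (negbTE Hne) => /eqP <-.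
    by rewrite -has_count has_pred1.
Qed.

Lemma avail_conv lam rho (c : cell_t lam) :
  [forall d, (insT d && (0 < rhoT rho d)) ==> ~~ RrT d c] =
  ((val c.2 == 0) || ~~ in_shape lam (val c.1) (val c.2).-1 || (rho (val c.1) (val c.2).-1 == 0)) &&
  ((val c.1 == 0) || ~~ in_shape lam (val c.1).-1 (val c.2) || (rho (val c.1).-1 (val c.2) == 0)).
Proof.
apply/idP/idP.
- move/forallP => H; apply/andP; split.
  + case Ej: (val c.2) => [|j] //=.
    case Hs: (in_shape lam (val c.1) j) => //=.
    rewrite eqn0Ngt; apply/negP => Hp.
    have Hj : j < max_row lam by move: (ltn_ord c.2); rewrite Ej; exact: ltnW.
    have := implyP (H (c.1, Ordinal Hj)); rewrite /insT /rhoT /= Hs Hp /RrT /= eqxx Ej eqxx /=.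
    by move=> /(_ isT).
  + case Ei: (val c.1) => [|i] //=.
    case Hs: (in_shape lam i (val c.2)) => //=.
    rewrite eqn0Ngt; apply/negP => Hp.
    have Hi : i < size lam by move: (ltn_ord c.1); rewrite Ei; exact: ltnW.
    have := implyP (H (Ordinal Hi, c.2)); rewrite /insT /rhoT /= Hs Hp /RrT /= Ei !eqxx orbT.
    by move=> /(_ isT).
- case/andP => HL HU; apply/forallP => d; apply/implyP => /andP [Hd Hd0]; apply/negP.
  rewrite /RrT => /orP [/andP [/eqP E1 /eqP E2] | /andP [/eqP E1 /eqP E2]].
  + rewrite E1 E2 /= in HL; rewrite /insT in Hd; rewrite Hd /= in HL.
    by rewrite /rhoT (eqP HL) in Hd0.
  + rewrite E1 E2 /= in HU; rewrite /insT in Hd; rewrite Hd /= in HU.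
    by rewrite /rhoT (eqP HU) in Hd0.
Qed.

Lemma cntw_andb (T : finType) n b (P : seq T -> bool) :
  cntw n (fun w => b && P w) = b * cntw n P.
Proof.
elim: n P => [|n IH] P /=; first by case: b; rewrite ?mul1n ?mul0n.
rewrite big_distrr /=; apply: eq_bigr => c _; exact: IH.
Qed.

Lemma nth_le_max lam i : nth 0 lam i <= max_row lam.
Proof.
elim: lam i => [|x l IH] [|i] //=; first exact: leq_maxl.
exact: leq_trans (IH i) (leq_maxr _ _).
Qed.

Lemma cntw_wn lam n rho : cntw n (validw (@rhoT lam rho)) = wn lam n rho.
Proof.
elim: n rho => [|n IH] rho.
  rewrite /= /validw /= andbT /svt_N.
  congr nat_of_bool.
  rewrite sum_nat_eq0.
  apply/idP/idP.
  - move/forallP => H; apply/forallP => i; rewrite sum_nat_eq0; apply/forallP => j.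
    have Hj : j < max_row lam := leq_trans (ltn_ord j) (nth_le_max lam i).
    have := implyP (H (i, Ordinal Hj)); rewrite /insT /in_shape /= !ltn_ord eq_sym /rhoT /=.
    by move=> /(_ isT).
  - move/forallP => H; apply/forallP => c; apply/implyP => /andP [_ Hj].
    have := implyP (H c.1) isT; rewrite sum_nat_eq0 => /forallP /(_ (Ordinal Hj)) /=.
    by rewrite eq_sym.
rewrite /=.
transitivity (\sum_(c : cell_t lam)
   (insT c && availn lam rho (val c.1) (val c.2)) * wn lam n (decn rho (val c.1) (val c.2))).
  apply: eq_bigr => c _.
  rewrite (_ : (fun w => validw (rhoT rho) (c :: w)) = fun w =>
     (insT c && (0 < rhoT rho c) && [forall d, (insT d && (0 < rhoT rho d)) ==> ~~ RrT d c])
     && validw (rhoT (decn rho (val c.1) (val c.2))) w); last first.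
    by apply: functional_extensionality => w; rewrite validw_cons.
  rewrite cntw_andb IH avail_conv /availn /rhoT -!andbA.
  done.
rewrite -(pair_bigA _ (fun (i : 'I_(size lam)) (j : 'I_(max_row lam)) =>
   (insT (i, j) && availn lam rho i j) * wn lam n (decn rho i j))) /=.
apply: eq_bigr => i _.
rewrite (big_ord_widen (max_row lam) (fun j => if availn lam rho i j then wn lam n (decn rho i j) else 0) (nth_le_max lam i)) [RHS]big_mkcond /=.
apply: eq_bigr => j _.
rewrite /insT /in_shape /= ltn_ord /=.
by case: (j < nth 0 lam i); case: (availn lam rho i j); rewrite ?mul1n ?mul0n.
Qed.


Lemma svt_count_swn lam rho : svt_count lam rho = swn lam rho.
Proof.
rewrite /svt_count /swn -cntw_wn -card_words; apply: eq_card => f.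
by rewrite !inE is_svt_validw.
Qed.

Lemma svt_N_decn lam rho i j : in_shape lam i j -> 0 < rho i j ->
  svt_N lam rho = (svt_N lam (decn rho i j)).+1.
Proof.
case/andP => Hi Hj Hp.
rewrite /svt_N (bigD1 (Ordinal Hi)) //= [in RHS](bigD1 (Ordinal Hi)) //=.
rewrite (bigD1 (Ordinal Hj)) //= [in RHS](bigD1 (Ordinal Hj)) //=.
have E0 : decn rho i j i j = (rho i j).-1 by rewrite /decn /upd !eqxx.
have E1 : \sum_(k < nth 0 lam i | k != Ordinal Hj) decn rho i j i k =
          \sum_(k < nth 0 lam i | k != Ordinal Hj) rho i k.
  apply: eq_bigr => k Hk; rewrite /decn /upd eqxx /=.
  by rewrite (_ : (nat_of_ord k == j) = false) //; exact: negbTE Hk.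
have E2 : \sum_(r < size lam | r != Ordinal Hi) \sum_(k < nth 0 lam r) decn rho i j r k =
          \sum_(r < size lam | r != Ordinal Hi) \sum_(k < nth 0 lam r) rho r k.
  apply: eq_bigr => r Hr; apply: eq_bigr => k _; rewrite /decn /upd.
  by rewrite (_ : (nat_of_ord r == i) = false) //; exact: negbTE Hr.
by rewrite E0 E1 E2 -!addSn prednK.
Qed.

Lemma swn_rec lam rho : 0 < svt_N lam rho ->
  swn lam rho = \sum_(i < size lam) \sum_(j < nth 0 lam i)
      (if availn lam rho i j then swn lam (decn rho i j) else 0).
Proof.
rewrite /swn; case E: (svt_N lam rho) => [|n] //= _.
apply: eq_bigr => i _; apply: eq_bigr => j _.
case Ha: (availn lam rho i j) => //.
have Hin : in_shape lam i j by rewrite /in_shape !ltn_ord.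
move: E; rewrite (svt_N_decn Hin); last by case/and3P: Ha.
by case=> ->.
Qed.


Lemma svt_N2 m1 m2 rho :
  svt_N [:: m1; m2] rho = \sum_(j < m1) rho 0 j + \sum_(j < m2) rho 1 j.
Proof. by rewrite /svt_N /= !big_ord_recl big_ord0 addn0. Qed.

Lemma swn_rec2 m1 m2 rho : 0 < svt_N [:: m1; m2] rho ->
  swn [:: m1; m2] rho =
  \sum_(j < m1) (if availn [:: m1; m2] rho 0 j then swn [:: m1; m2] (decn rho 0 j) else 0) +
  \sum_(j < m2) (if availn [:: m1; m2] rho 1 j then swn [:: m1; m2] (decn rho 1 j) else 0).
Proof. by move=> H; rewrite swn_rec // /= !big_ord_recl big_ord0 addn0. Qed.

Lemma availn_left lam rho i j : in_shape lam i j.-1 -> 0 < j -> 0 < rho i j.-1 ->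
  availn lam rho i j = false.
Proof. by move=> Hs Hj Hp; rewrite /availn !eqn0Ngt Hj Hp Hs /= andbF. Qed.

Lemma availn_up lam rho i j : in_shape lam i.-1 j -> 0 < i -> 0 < rho i.-1 j ->
  availn lam rho i j = false.
Proof. by move=> Hs Hi Hp; rewrite /availn !eqn0Ngt Hi Hp Hs /= !andbF. Qed.

Lemma availn_zero lam rho i j : rho i j = 0 -> availn lam rho i j = false.
Proof. by move=> H; rewrite /availn H. Qed.

Lemma stepA1 m1 m2 rho : m2 <= m1.+1 ->
  (forall j, 0 < j < m1.+1 -> 0 < rho 0 j) -> (forall j, j < m2 -> 0 < rho 1 j) ->
  0 < rho 0 0 -> swn [:: m1.+1; m2] rho = swn [:: m1.+1; m2] (decn rho 0 0).
Proof.
move=> Hm H0 H1 H00.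
rewrite swn_rec2; last by rewrite svt_N2 big_ord_recl -addnA ltn_addr.
rewrite big_ord_recl.
have -> : availn [:: m1.+1; m2] rho 0 (@ord0 m1) by rewrite /availn /= H00.
have Hpos : forall k, k < m1.+1 -> 0 < rho 0 k by case => [|k] Hk //; apply: H0.
rewrite big1 ?big1 ?addn0 // => j _.
  have Hj : j < m1.+1 := leq_trans (ltn_ord j) Hm.
  by rewrite availn_up //= /in_shape /= ?Hj ?Hpos.
have Hj : j < m1.+1 := ltnW (ltn_ord j).
by rewrite availn_left //= ?lift0 /= /in_shape /= ?Hj ?Hpos.
Qed.

Lemma stepA m1 m2 rho k : m2 <= m1.+1 ->
  (forall j, 0 < j < m1.+1 -> 0 < rho 0 j) -> (forall j, j < m2 -> 0 < rho 1 j) ->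
  swn [:: m1.+1; m2] (upd rho 0 0 k) = swn [:: m1.+1; m2] (upd rho 0 0 0).
Proof.
move=> Hm H0 H1; elim: k => [//|k IH].
rewrite stepA1 //.
- rewrite -IH; congr swn.
  apply: functional_extensionality => i; apply: functional_extensionality => j.
  by rewrite /decn /upd /=; case: ((i == 0) && (j == 0)).
- move=> j /andP [Hj Hj']; rewrite /upd /= (gtn_eqF Hj); apply: H0; by rewrite Hj.
Qed.

Definition st rho x y := upd (upd (upd rho 0 0 0) 0 1 x) 1 0 y.

Lemma stepB m1 m2 rho x y : m2 <= m1 ->
  (forall j, 1 < j < m1.+2 -> 0 < rho 0 j) -> (forall j, 0 < j < m2.+2 -> 0 < rho 1 j) ->
  swn [:: m1.+2; m2.+2] (st rho x.+1 y) =
  swn [:: m1.+2; m2.+2] (st rho x y) +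
  (if y is y'.+1 then swn [:: m1.+2; m2.+2] (st rho x.+1 y') else 0).
Proof.
move=> Hm H0 H1.
have Hr0 : forall j, 0 < j < m1.+2 -> 0 < st rho x.+1 y 0 j.
  case=> [|[|j]] //= Hj; rewrite /st /upd /=; apply: H0; exact: Hj.
rewrite swn_rec2; last first.
  rewrite svt_N2 2!big_ord_recl /=.
  apply: leq_trans (leq_addr _ _); apply: leq_trans (leq_addl _ _).
  apply: leq_trans (leq_addr _ _); exact: Hr0.
rewrite !big_ord_recl !lift0.
rewrite (@availn_zero _ _ 0 0); last by rewrite /st /upd.
have -> : availn [:: m1.+2; m2.+2] (st rho x.+1 y) 0 1.
  by rewrite /availn /st /upd /=.
have -> : decn (st rho x.+1 y) 0 1 = st rho x y.
  apply: functional_extensionality => i; apply: functional_extensionality => j.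
  by rewrite /decn /st /upd /=; case: i => [|[|i]] //; case: j => [|[|j]].
rewrite big1; last first.
  move=> j _; have Hj : j <= m1 := ltnW (ltn_ord j).
  rewrite !lift0 availn_left //=.
  by apply: Hr0; rewrite /= ?ltnS.
rewrite (@availn_up _ _ 1 1) //.
rewrite big1; last first.
  move=> j _; rewrite !lift0 availn_up //=; last first.
    by apply: Hr0; rewrite /= !ltnS (leq_trans (ltn_ord j) Hm).
  by rewrite /in_shape /= !ltnS (leq_trans (ltn_ord j) Hm).
have -> : availn [:: m1.+2; m2.+2] (st rho x.+1 y) 1 0 = (0 < y).
  by rewrite /availn /st /upd /= andbT.
clear Hr0; case: y => [|y] /=; first by rewrite !addn0.
have -> : decn (st rho x.+1 y.+1) 1 0 = st rho x.+1 y.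
  apply: functional_extensionality => i; apply: functional_extensionality => j.
  by rewrite /decn /st /upd /=; case: i => [|[|i]] //; case: j => [|[|j]].
by rewrite !addn0 add0n.
Qed.


Lemma lattice (h : nat -> nat -> nat) :
  (forall x y, h x.+1 y = h x y + (if y is y'.+1 then h x.+1 y' else 0)) ->
  forall x y, h x.+1 y = \sum_(0 <= i < y.+1) 'C(x + i, i) * h 0 (y - i).
Proof.
move=> Hr x y; elim: y x => [|y IHy] x.
  rewrite big_nat1 bin0 mul1n subn0.
  by elim: x => [|x IHx]; rewrite Hr addn0.
elim: x => [|x IHx].
  rewrite Hr IHy [RHS]big_nat_recl // add0n binn mul1n subn0; congr (_ + _).
  by apply: eq_bigr => i _; rewrite !add0n !binn subSS.
rewrite Hr IHx IHy [X in X + _ = _]big_nat_recl // [RHS]big_nat_recl // !bin0 !mul1n !subn0 -addnA.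
congr (_ + _).
rewrite -big_split /=; apply: eq_bigr => i _.
rewrite subSS -mulnDl; congr (_ * _); rewrite [in RHS]addnS binS; congr (_ + _); by rewrite addnS addSn.
Qed.


Definition mrel m1 m2 (rho sig : nat -> nat -> nat) :=
  [/\ rho 0 0 = 0, rho 0 1 = 0, (rho 1 0 = 0 \/ 0 < rho 1 1),
      (forall j, j < m1.+1 -> sig 0 j = rho 0 j.+1) &
      (sig 1 0 = rho 1 0 + rho 1 1 /\
      (forall j, 0 < j < m2.+1 -> sig 1 j = rho 1 j.+1))].

Lemma mrel_N m1 m2 rho sig : mrel m1 m2 rho sig ->
  svt_N [:: m1.+2; m2.+2] rho = svt_N [:: m1.+1; m2.+1] sig.
Proof.
case=> H00 H01 Hor Hs0 [Hs10 Hs1].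
rewrite !svt_N2 [\sum_(j < m1.+2) _]big_ord_recl H00 add0n.
rewrite [\sum_(j < m2.+2) _]big_ord_recl [\sum_(j < m2.+1) rho 1 _]big_ord_recl.
rewrite [\sum_(j < m2.+1) sig 1 _]big_ord_recl Hs10.
have EA : \sum_(i < m1.+1) rho 0 (lift ord0 i) = \sum_(j < m1.+1) sig 0 j.
  by apply: eq_bigr => j _; rewrite lift0 Hs0.
have EB : \sum_(i < m2) rho 1 (lift ord0 (lift ord0 i)) = \sum_(i < m2) sig 1 (lift ord0 i).
  by apply: eq_bigr => j _; rewrite !lift0 Hs1 //= ltnS ltn_ord.
rewrite EA EB lift0 /=.
lia.
Qed.

Lemma mrel_row0 m1 m2 rho sig j : mrel m1 m2 rho sig -> j < m1 ->
  mrel m1 m2 (decn rho 0 j.+2) (decn sig 0 j.+1).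
Proof.
case=> H00 H01 Hor Hs0 [Hs10 Hs1] Hj.
have Hj1 : j.+1 < m1.+1 by rewrite ltnS.
split.
- by rewrite /decn /upd /=.
- by rewrite /decn /upd /=.
- by rewrite /decn /upd /=.
- move=> k Hk; rewrite /decn /upd /= eqSS; case: (eqVneq k j.+1) => [Ek|_]; by rewrite ?Ek Hs0.
- split; first by rewrite /decn /upd /=.
  move=> k Hk; rewrite /decn /upd /=; exact: Hs1.
Qed.

Lemma mrel_row1 m1 m2 rho sig j : mrel m1 m2 rho sig -> j < m2 ->
  mrel m1 m2 (decn rho 1 j.+2) (decn sig 1 j.+1).
Proof.
case=> H00 H01 Hor Hs0 [Hs10 Hs1] Hj.
have Hj1 : 0 < j.+1 < m2.+1 by rewrite ltnS.
split.
- by rewrite /decn /upd /=.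
- by rewrite /decn /upd /=.
- by rewrite /decn /upd /=.
- move=> k Hk; rewrite /decn /upd /=; exact: Hs0.
- split; first by rewrite /decn /upd /=.
  move=> k Hk; rewrite /decn /upd /= eqSS; case: (eqVneq k j.+1) => [Ek|_]; by rewrite ?Ek Hs1.
Qed.

Lemma mrel_10 m1 m2 rho sig : mrel m1 m2 rho sig -> 0 < rho 1 0 ->
  mrel m1 m2 (decn rho 1 0) (decn sig 1 0).
Proof.
case=> H00 H01 Hor Hs0 [Hs10 Hs1] Hp.
split.
- by rewrite /decn /upd /=.
- by rewrite /decn /upd /=.
- rewrite /decn /upd /=; case: Hor => [H|H]; [by rewrite H in Hp | by right].
- move=> k Hk; rewrite /decn /upd /=; exact: Hs0.
- split.
    by rewrite /decn /upd /= Hs10; case: (rho 1 0) Hp.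
  move=> k /andP [Hk Hk']; rewrite /decn /upd /= (gtn_eqF Hk) Hs1 ?Hk //.
Qed.

Lemma mrel_11 m1 m2 rho sig : mrel m1 m2 rho sig -> rho 1 0 = 0 ->
  mrel m1 m2 (decn rho 1 1) (decn sig 1 0).
Proof.
case=> H00 H01 Hor Hs0 [Hs10 Hs1] Hz.
split.
- by rewrite /decn /upd /=.
- by rewrite /decn /upd /=.
- by rewrite /decn /upd /=; left.
- move=> k Hk; rewrite /decn /upd /=; exact: Hs0.
- split.
    by rewrite /decn /upd /= Hs10 Hz.
  move=> k /andP [Hk Hk']; rewrite /decn /upd /= (gtn_eqF Hk) Hs1 ?Hk //.
  by case: k Hk {Hk'}.
Qed.

Lemma merge m1 m2 : m2 <= m1 -> forall rho sig, mrel m1 m2 rho sig ->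
  swn [:: m1.+2; m2.+2] rho = swn [:: m1.+1; m2.+1] sig.
Proof.
move=> Hm.
suff H : forall n rho sig, svt_N [:: m1.+2; m2.+2] rho = n -> mrel m1 m2 rho sig ->
   swn [:: m1.+2; m2.+2] rho = swn [:: m1.+1; m2.+1] sig.
  by move=> rho sig Hr; exact: H _ _ _ erefl Hr.
elim=> [|n IH] rho sig HN Hr.
  by rewrite /swn -(mrel_N Hr) HN /= -(mrel_N Hr) HN.
have HN' : svt_N [:: m1.+1; m2.+1] sig = n.+1 by rewrite -(mrel_N Hr).
rewrite swn_rec2 ?HN // swn_rec2 ?HN' //.
have [H00 H01 Hor Hs0 [Hs10 Hs1]] := Hr.
have IHd : forall i j, in_shape [:: m1.+2; m2.+2] i j -> 0 < rho i j -> forall sig',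
    mrel m1 m2 (decn rho i j) sig' -> swn [:: m1.+2; m2.+2] (decn rho i j) = swn [:: m1.+1; m2.+1] sig'.
  move=> i j Hs Hp sig' Hr'; apply: IH Hr'; move: HN; rewrite (svt_N_decn Hs Hp); by case.
rewrite !big_ord_recl !lift0.
rewrite (@availn_zero _ _ 0 0) // (@availn_zero _ _ 0 1) //.
rewrite (@availn_zero _ _ 0 0 (_ : sig 0 0 = 0)); last by rewrite Hs0.
rewrite !add0n; congr (_ + _); [|rewrite addnA; congr (_ + _)].
- apply: eq_bigr => j _; rewrite !lift0.
  have hA : availn [:: m1.+2; m2.+2] rho 0 j.+2 = availn [:: m1.+1; m2.+1] sig 0 j.+1.
    have hj0 : j < m1.+1 by rewrite ltnS ltnW.
    have hj1 : j.+1 < m1.+2 by rewrite ltnS.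
    have hj2 : j.+1 < m1.+1 by rewrite ltnS ltn_ord.
    by rewrite /availn /in_shape /= (Hs0 j.+1 hj2) (Hs0 j hj0) hj0 hj1.
  rewrite -hA; case Ha: availn => //; apply: IHd.
  + by rewrite /in_shape /= !ltnS ltn_ord.
  + by case/and3P: Ha.
  + exact: mrel_row0 Hr (ltn_ord j).
- rewrite /=.
  have a10 : availn [:: m1.+2; m2.+2] rho 1 0 = (0 < rho 1 0).
    by rewrite /availn /in_shape /= H00 ?eqxx ?orbT ?andbT.
  have a11 : availn [:: m1.+2; m2.+2] rho 1 1 = (0 < rho 1 1) && (rho 1 0 == 0).
    by rewrite /availn /in_shape /= H01 ?eqxx ?orbT ?andbT.
  have a'10 : availn [:: m1.+1; m2.+1] sig 1 0 = (0 < sig 1 0).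
    by rewrite /availn /in_shape /= (Hs0 0) // H01 ?eqxx ?orbT ?andbT.
  rewrite a10 a11 a'10 Hs10.
  case: (posnP (rho 1 0)) => [Hz|Hp].
    rewrite Hz /= andbT !add0n.
    case Hq: (0 < rho 1 1) => //; apply: IHd => //.
    exact: mrel_11 Hr Hz.
  rewrite andbF addn0 ltn_addr //.
  apply: IHd => //; exact: mrel_10 Hr Hp.
- apply: eq_bigr => j _; rewrite !lift0.
  have jm1 : j < m1 := leq_trans (ltn_ord j) Hm.
  have k1 : j.+1 < m2.+2 by rewrite !ltnS (ltnW (ltn_ord j)).
  have k2 : j.+2 < m1.+2 by rewrite !ltnS.
  have k3 : j < m2.+1 by rewrite ltnS (ltnW (ltn_ord j)).
  have k4 : j.+1 < m1.+1 by rewrite ltnS.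
  have k5 : 0 < j.+1 < m2.+1 by rewrite /= ltnS.
  have E : (rho 1 j.+1 == 0) = (sig 1 j == 0).
    case Ej: (nat_of_ord j) => [|j'].
      rewrite Hs10; case: Hor => [->|H]; first by rewrite add0n.
      by rewrite (gtn_eqF H) addn_eq0 (gtn_eqF H) andbF.
    by rewrite Hs1 //= -Ej k3.
  have hB : availn [:: m1.+2; m2.+2] rho 1 j.+2 = availn [:: m1.+1; m2.+1] sig 1 j.+1.
    by rewrite /availn /in_shape /= k1 k2 k3 k4 (Hs1 j.+1 k5) (Hs0 j.+1 k4) E.
  rewrite -hB; case Ha: availn => //; apply: IHd.
  + by rewrite /in_shape /= !ltnS ltn_ord.
  + by case/and3P: Ha.
  + exact: mrel_row1 Hr (ltn_ord j).
Qed.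


Unset Implicit Arguments.

Theorem theorem6 (n1 n2 : nat) (a b : nat -> nat)
  (Hn2 : 2 <= n2) (Hn : n2 <= n1)
  (Ha : forall j, 1 <= j <= n1 -> 0 < a j)
  (Hb : forall j, 1 <= j <= n2 -> 0 < b j) :
  svt_count [:: n1; n2] (fun i j => if i == 0 then a j.+1 else b j.+1) =
  \sum_(0 <= i < (b 1).+1)
     'C(a 2 + i - 1, i) *
     svt_count [:: n1.-1; n2.-1]
       (fun r j => if r == 0 then a j.+2
                   else if j == 0 then b 1 + b 2 - i else b j.+2).
Proof.
case: n2 Hn2 Hn Hb => [|[|m2]] // _.
case: n1 Ha => [|[|m1]] // Ha Hm Hb; rewrite !ltnS in Hm.
rewrite /=.
set rho0 := fun i j => if i == 0 then a j.+1 else b j.+1.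
have Ha2 : 0 < a 2 by apply: Ha.
have Hb2 : 0 < b 2 by apply: Hb.
rewrite svt_count_swn.
have -> : rho0 = upd rho0 0 0 (a 1).
  apply: functional_extensionality => i; apply: functional_extensionality => j.
  by rewrite /upd /rho0; case: i => [|i] //; case: j.
rewrite stepA; first last.
- move=> j Hj; rewrite /rho0 /=; apply: Hb; by rewrite /= -ltnS.
- move=> j /andP [_ Hj]; rewrite /rho0 /=; apply: Ha; by rewrite /= -ltnS.
- by rewrite !ltnS.
have -> : upd rho0 0 0 0 = st rho0 (a 2).-1.+1 (b 1).
  rewrite prednK //.
  apply: functional_extensionality => i; apply: functional_extensionality => j.
  by rewrite /st /upd /rho0; case: i => [|[|i]] //; case: j => [|[|j]].
rewrite (@lattice (fun x y => swn [:: m1.+2; m2.+2] (st rho0 x y))); last first.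
  move=> x y; apply: stepB => //.
  - move=> j /andP [_ Hj]; rewrite /rho0 /=; apply: Ha; by rewrite /= -ltnS.
  - move=> j /andP [_ Hj]; rewrite /rho0 /=; apply: Hb; by rewrite /= -ltnS.
apply: eq_big_nat => i /andP [_ Hi]; rewrite ltnS in Hi.
congr (_ * _).
  by congr 'C(_, _); lia.
set rhoi := fun r j => if r == 0 then a j.+2 else if j == 0 then b 1 + b 2 - i else b j.+2.
rewrite svt_count_swn.
have -> : rhoi = upd rhoi 0 0 (a 2).
  apply: functional_extensionality => r; apply: functional_extensionality => j.
  by rewrite /upd /rhoi; case: r => [|r] //; case: j.
rewrite stepA; first last.
- move=> j Hj; rewrite /rhoi /=; case: j Hj => [|j] Hj /=.
    by rewrite addnC -addnBA // ltn_addr.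
  apply: Hb; by rewrite /= -ltnS.
- move=> j /andP [_ Hj]; rewrite /rhoi /=; apply: Ha; by rewrite /= -ltnS.
- by [].
apply: merge => //.
split.
- by rewrite /st /upd.
- by rewrite /st /upd.
- by right; rewrite /st /upd /rho0.
- by case=> [|j] Hj; rewrite /st /upd /rho0 /rhoi.
- split.
    rewrite /st /upd /rho0 /rhoi /=; lia.
  by case=> [|j] // Hj; rewrite /st /upd /rho0 /rhoi.
Qed.
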